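(* Let $r>2.2$ be real and let $p,q$ be primes with $p>q^2$. Then $\sigma_{-r}(qp)<\sigma_{-r}(q^2)$.
   Context: For $n\in\mathbb{N}$ and real $r$, $\sigma_{-r}(n)=\sum_{d\mid n}d^{-r}$. *)

(* Defs.v *)
From Stdlib Require Import Reals Lra Lia Arith List Znumtheory ZArith.
Open Scope R_scope.

Definition divisors_list (n : nat) : list nat :=
  filter (fun d => Nat.eqb (n mod d) 0) (seq 1 n).

Definition sigma_neg (r : R) (n : nat) : R :=
  fold_right Rplus 0 (map (fun d => Rpower (INR d) (- r)) (divisors_list n)).

(* Main.v *)
Require Import Defs.
From Stdlib Require Import Reals ZArith Znumtheory.
From Stdlib Require Import Lra Lia List Permutation.
Open Scope R_scope.

Lemma divZ (a b x : Z) : prime a -> prime b -> (0 < x)%Z -> (x | a * b)%Z ->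
  x = 1%Z \/ x = a \/ x = b \/ x = (a * b)%Z.
Proof.
  intros Ha Hb Hx Hd.
  pose proof (prime_ge_2 _ Ha). pose proof (prime_ge_2 _ Hb).
  destruct (Zdivide_dec b x) as [[k Hk]|Hn].
  - subst x. assert (Hka : (k | a)%Z).
    { apply (Z.mul_divide_cancel_r k a b); [lia|exact Hd]. }
    destruct (prime_divisors _ Ha _ Hka) as [E|[E|[E|E]]]; subst k; lia.
  - assert (Hxa : (x | a)%Z).
    { apply Gauss with b. rewrite Z.mul_comm; exact Hd.
      apply rel_prime_sym, prime_rel_prime; auto. }
    destruct (prime_divisors _ Ha _ Hxa) as [E|[E|[E|E]]]; subst x; lia.
Qed.

Lemma In_div (n x : nat) : In x (divisors_list n) <-> (1 <= x /\ x <= n /\ n mod x = 0)%nat.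
Proof.
  unfold divisors_list. rewrite filter_In, in_seq, Nat.eqb_eq. lia.
Qed.

Lemma NoDup_div n : NoDup (divisors_list n).
Proof. apply NoDup_filter, seq_NoDup. Qed.

Lemma sum_perm (l l' : list R) : Permutation l l' -> fold_right Rplus 0 l = fold_right Rplus 0 l'.
Proof. induction 1; simpl; lra. Qed.

Lemma nat_div_Z (d n : nat) : (1 <= d)%nat -> (n mod d = 0)%nat -> (Z.of_nat d | Z.of_nat n)%Z.
Proof.
  intros H1 H2. apply Nat.Lcm0.mod_divide in H2. destruct H2 as [k Hk].
  exists (Z.of_nat k). rewrite Hk, Nat2Z.inj_mul. reflexivity.
Qed.

Lemma mod0 (a b : nat) : (1 <= a)%nat -> ((a * b) mod a = 0)%nat.
Proof. intros. rewrite Nat.mul_comm. apply Nat.Div0.mod_mul. Qed.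

Lemma divs_qp (p q : nat) : prime (Z.of_nat p) -> prime (Z.of_nat q) -> (p > q * q)%nat ->
  Permutation (divisors_list (q * p)) (1 :: q :: p :: q * p :: nil)%nat.
Proof.
  intros Hp Hq Hpq. pose proof (prime_ge_2 _ Hp). pose proof (prime_ge_2 _ Hq).
  apply NoDup_Permutation. apply NoDup_div.
  - repeat constructor; simpl; intuition nia.
  - intros x. rewrite In_div. split.
    + intros (H1 & H2 & H3). apply nat_div_Z in H3; [|lia].
      rewrite Nat2Z.inj_mul in H3.
      destruct (divZ _ _ (Z.of_nat x) Hq Hp ltac:(lia) H3) as [E|[E|[E|E]]];
        simpl; rewrite <- ?Nat2Z.inj_mul in E; first [left; lia | apply Nat2Z.inj in E; subst x; tauto].
    + simpl. intros [E|[E|[E|[E|[]]]]]; subst x; (split; [nia|split;[nia|]]).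
      * apply Nat.mod_1_r.
      * apply mod0; lia.
      * rewrite Nat.mul_comm; apply mod0; lia.
      * apply Nat.Div0.mod_same.
Qed.

Lemma divs_qq (q : nat) : prime (Z.of_nat q) ->
  Permutation (divisors_list (q * q)) (1 :: q :: q * q :: nil)%nat.
Proof.
  intros Hq. pose proof (prime_ge_2 _ Hq).
  apply NoDup_Permutation. apply NoDup_div.
  - repeat constructor; simpl; intuition nia.
  - intros x. rewrite In_div. split.
    + intros (H1 & H2 & H3). apply nat_div_Z in H3; [|lia].
      rewrite Nat2Z.inj_mul in H3.
      destruct (divZ _ _ (Z.of_nat x) Hq Hq ltac:(lia) H3) as [E|[E|[E|E]]];
        simpl; rewrite <- ?Nat2Z.inj_mul in E; first [left; lia | apply Nat2Z.inj in E; subst x; tauto].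
    + simpl. intros [E|[E|[E|[]]]]; subst x; (split; [nia|split;[nia|]]).
      * apply Nat.mod_1_r.
      * apply mod0; lia.
      * apply Nat.Div0.mod_same.
Qed.

Theorem mainTheorem7 (r : R) (p q : nat) :
  r > 11 / 5 ->
  prime (Z.of_nat p) -> prime (Z.of_nat q) ->
  (p > q * q)%nat ->
  sigma_neg r (q * p) < sigma_neg r (q * q).
Proof.
  intros Hr Hp Hq Hpq.
  pose proof (prime_ge_2 _ Hp). pose proof (prime_ge_2 _ Hq).
  unfold sigma_neg.
  rewrite (sum_perm _ _ (Permutation_map _ (divs_qp p q Hp Hq Hpq))).
  rewrite (sum_perm _ _ (Permutation_map _ (divs_qq q Hq))).
  simpl map; simpl fold_right.
  rewrite !mult_INR, !Rpower_Ropp.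
  assert (Hq2 : 2 <= INR q) by (replace 2 with (INR 2) by (simpl; lra); apply le_INR; lia).
  assert (Hp2 : INR q * INR q + 1 <= INR p).
  { rewrite <- mult_INR. replace 1 with (INR 1) by reflexivity. rewrite <- plus_INR. apply le_INR. lia. }
  assert (Hp0 : 0 < INR p) by nra.
  rewrite <- !Rpower_mult_distr by lra.
  set (s := r - 2).
  assert (Hs : 0 < s) by (unfold s; lra).
  assert (Er : r = INR 2 + s) by (unfold s; simpl; lra).
  rewrite Er, !Rpower_plus, !Rpower_pow by lra.
  set (Q := Rpower (INR q) s). set (P := Rpower (INR p) s).
  assert (HQ : 1 <= Q).
  { unfold Q. rewrite <- (Rpower_O (INR q)) by lra.
    left. apply Rpower_lt; lra. }
  assert (HP : Q * Q <= P).
  { unfold Q, P. rewrite Rpower_mult_distr by lra. apply Rle_Rpower_l; nra. }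
  set (a := INR q) in *. set (b := INR p) in *.
  assert (Hb : 0 < b) by nra.
  (* goal: 1 + /(a^2 Q) + /(b^2 P) + /(a^2 Q * (b^2 P)) < 1 + /(a^2Q) + /(a^2Q*(a^2Q)) *)
  assert (HA : 0 < a ^ 2 * Q) by (apply Rmult_lt_0_compat; nra).
  assert (HB : 0 < b ^ 2 * P) by (apply Rmult_lt_0_compat; nra).
  set (A := a ^ 2 * Q) in *. set (B := b ^ 2 * P) in *.
  assert (Key : A * A + A < B).
  { unfold A, B.
    assert (h1 : (a*a+1)*(a*a+1) <= b*b) by nra.
    assert (h2 : b ^ 2 * (Q * Q) <= b ^ 2 * P) by (apply Rmult_le_compat_l; nra).
    assert (h3 : (a*a+1)*(a*a+1) * (Q*Q) <= b*b*(Q*Q)) by (apply Rmult_le_compat_r; nra).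
    assert (h4 : a*a*Q <= a*a*(Q*Q)) by (apply Rmult_le_compat_l; nra).
    simpl in *. nra. }
  assert (/ B + / (A * B) < / (A * A)).
  { replace (/ B + / (A * B)) with ((A * A + A) * / (A * A * B)) by (field; lra).
    replace (/ (A * A)) with (B * / (A * A * B)) by (field; lra).
    apply Rmult_lt_compat_r; [apply Rinv_0_lt_compat; apply Rmult_lt_0_compat; [apply Rmult_lt_0_compat|]; assumption | exact Key]. }
  lra.
Qed.
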